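(* Let $\mathrm{Min}=\{X\in 2^\omega: X \text{ is of minimal Turing degree}\}$ and suppose $\dim_H(\mathrm{Min})=r$. Then every maximal antichain of Turing degrees has Hausdorff dimension at least $r$.
   Context: $X$ is of minimal degree if $X$ is non-computable and every $Y\le_T X$ is either computable or satisfies $X\le_T Y$. A class $\mathcal B\subseteq 2^\omega$ is an antichain of Turing degrees if (a) $\mathcal B$ contains no computable set; (b) $X\in\mathcal B$ and $Y\equiv_T X$ imply $Y\in\mathcal B$; (c) for all $X,Y\in\mathcal B$ with $X\not\equiv_T Y$, $X\not<_T Y$ and $Y\not<_T X$; it is maximal if for every (non-computable) $W\notin\mathcal B$ the class $\mathcal B\cup\{X:X\equiv_T W\}$ is no longer an antichain. $\dim_H$ is the classical Hausdorff dimension on Cantor space. *)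

(* Defs.v *)
From Stdlib Require Import Reals List Arith Lra.
Import ListNotations.
Open Scope R_scope.

Definition Cantor := nat -> bool.

(** * Oracle computation: register (Minsky) machines with an oracle query
    instruction.  By the standard equivalence, these compute exactly the
    functions partial recursive relative to the oracle. *)
Inductive instr : Type :=
| INC (r : nat)
| DECJZ (r j : nat)
| ORC (r : nat).

Definition prog := list instr.
Definition regs := nat -> nat.

Definition upd (R : regs) (r v : nat) : regs :=
  fun k => if Nat.eqb k r then v else R k.

Definition exec (X : Cantor) (i : instr) (pc : nat) (R : regs) : nat * regs :=
  match i with
  | INC r => (S pc, upd R r (S (R r)))
  | DECJZ r j => match R r with
                 | O => (j, R)
                 | S m => (S pc, upd R r m)
                 end
  | ORC r => (S pc, upd R r (if X (R r) then 1%nat else 0%nat))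
  end.

(** [run X p fuel pc R] = [Some R'] iff the machine halts (pc leaves the
    program) within [fuel] steps with final registers [R']. *)
Fixpoint run (X : Cantor) (p : prog) (fuel : nat) (pc : nat) (R : regs)
  : option regs :=
  match nth_error p pc with
  | None => Some R
  | Some i => match fuel with
              | O => None
              | S f => let '(pc', R') := exec X i pc R in run X p f pc' R'
              end
  end.

Definition init (n : nat) : regs := fun k => if Nat.eqb k 0 then n else 0%nat.

Definition computes_with (X : Cantor) (p : prog) (A : Cantor) : Prop :=
  forall n, exists fuel R, run X p fuel 0 (init n) = Some R /\
                           R 0%nat = (if A n then 1%nat else 0%nat).

Definition Treducible (A X : Cantor) : Prop := exists p, computes_with X p A.

Definition computable (A : Cantor) : Prop := Treducible A (fun _ => false).

Definition Tequiv (A B : Cantor) : Prop := Treducible A B /\ Treducible B A.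
Definition Tless (A B : Cantor) : Prop := Treducible A B /\ ~ Treducible B A.

Definition minimal_degree (X : Cantor) : Prop :=
  ~ computable X /\
  forall Y, Treducible Y X -> computable Y \/ Treducible X Y.

Definition Min : Cantor -> Prop := fun X => minimal_degree X.

(** Antichains of Turing degrees, as classes of sets. *)
Definition antichain (B : Cantor -> Prop) : Prop :=
  (forall X, B X -> ~ computable X) /\
  (forall X Y, B X -> Tequiv Y X -> B Y) /\
  (forall X Y, B X -> B Y -> ~ Tequiv X Y -> ~ Tless X Y /\ ~ Tless Y X).

Definition maximal_antichain (B : Cantor -> Prop) : Prop :=
  antichain B /\
  forall W, ~ computable W -> ~ B W ->
    ~ antichain (fun X => B X \/ Tequiv X W).

(** * Hausdorff dimension on Cantor space (standard metric
    d(X,Y) = 2^{-min{n | X n <> Y n}}; the cylinder [sigma] has diameter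
    2^{-|sigma|}). *)
Definition prefix (s : list bool) (X : Cantor) : Prop :=
  forall i, (i < length s)%nat -> nth i s false = X i.

Definition cost (s : R) (c : option (list bool)) : R :=
  match c with
  | None => 0
  | Some sg => Rpower 2 (- (s * INR (length sg)))
  end.

Definition Hnull (s : R) (A : Cantor -> Prop) : Prop :=
  forall eps, 0 < eps ->
    exists C : nat -> option (list bool),
      (forall X, A X -> exists i sg, C i = Some sg /\ prefix sg X) /\
      (forall N, sum_f_R0 (fun i => cost s (C i)) N <= eps).

Definition is_dimH (A : Cantor -> Prop) (d : R) : Prop :=
  (forall s, 0 <= s -> Hnull s A -> d <= s) /\
  (forall t, (forall s, 0 <= s -> Hnull s A -> t <= s) -> t <= d).

(* Main.v *)
Require Import Defs.
From Stdlib Require Import Reals List Arith Lia Lra FunctionalExtensionality Classical.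
Import ListNotations.
Local Open Scope nat_scope.

Definition state := (nat * regs)%type.
Definition step (X:Cantor) (P:prog) (s:state) : option state :=
  match nth_error P (fst s) with Some i => Some (exec X i (fst s) (snd s)) | None => None end.
Inductive star X P : state -> state -> Prop :=
| star_refl s : star X P s s
| star_step s1 s2 s3 : step X P s1 = Some s2 -> star X P s2 s3 -> star X P s1 s3.

Lemma star_trans X P s1 s2 s3 : star X P s1 s2 -> star X P s2 s3 -> star X P s1 s3.
Proof. induction 1; intros; auto. eapply star_step; eauto. Qed.

Lemma run_of_star X P s s' : star X P s s' -> nth_error P (fst s') = None ->
  exists f, run X P f (fst s) (snd s) = Some (snd s').
Proof.
  induction 1; intros Hn.
  - exists 0. destruct s as [pc R]. simpl in *. now rewrite Hn.
  - destruct (IHstar Hn) as [f Hf]. exists (S f). destruct s1 as [pc R].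
    unfold step in H. simpl in *. destruct (nth_error P pc) as [i|]; [|discriminate].
    injection H as <-. destruct (exec X i pc R) as [pc2 R2]. exact Hf.
Qed.

Lemma star_of_run X P f : forall pc R R', run X P f pc R = Some R' ->
  exists pc', star X P (pc,R) (pc',R') /\ nth_error P pc' = None.
Proof.
  induction f; intros pc R R' H; simpl in H; destruct (nth_error P pc) eqn:E.
  - discriminate.
  - injection H as <-. exists pc. split; [constructor|auto].
  - destruct (exec X i pc R) as [pc2 R2] eqn:Ex. destruct (IHf _ _ _ H) as [pc' [H1 H2]].
    exists pc'. split; auto. eapply star_step; [|exact H1]. unfold step; simpl. rewrite E. now rewrite Ex.
  - injection H as <-. exists pc. split; [constructor|auto].
Qed.

Lemma upd_same R r v : upd R r v r = v.
Proof. unfold upd. now rewrite Nat.eqb_refl. Qed.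
Lemma upd_other R r v k : k <> r -> upd R r v k = R k.
Proof. intros. unfold upd. destruct (Nat.eqb_spec k r); congruence. Qed.

Ltac regs_eq := apply functional_extensionality; let k := fresh "k" in intro k; unfold upd;
  repeat match goal with |- context [Nat.eqb ?a ?b] => destruct (Nat.eqb_spec a b) end; subst; try lia; try congruence.

Definition contains (P : prog) (o : nat) (Q : prog) :=
  forall i, i < length Q -> nth_error P (o+i) = nth_error Q i.

Lemma contains_app P o Q1 Q2 : contains P o (Q1 ++ Q2) ->
  contains P o Q1 /\ contains P (o + length Q1) Q2.
Proof.
  intros H; split; intros i Hi.
  - rewrite H by (rewrite length_app; lia). now rewrite nth_error_app1.
  - replace (o + length Q1 + i) with (o + (length Q1 + i)) by lia.
    rewrite H by (rewrite length_app; lia). rewrite nth_error_app2 by lia. f_equal; lia.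
Qed.

Lemma contains_at P o Q i ins : contains P o Q -> nth_error Q i = Some ins -> nth_error P (o+i) = Some ins.
Proof. intros H E. rewrite H; auto. apply nth_error_Some. congruence. Qed.

Lemma cat P o Q i ins a : contains P o Q -> nth_error Q i = Some ins -> a = o + i -> nth_error P a = Some ins.
Proof. intros; subst; eapply contains_at; eauto. Qed.

Lemma st1 X P a R ins : nth_error P a = Some ins -> star X P (a,R) (exec X ins a R).
Proof. intros E. eapply star_step; [|constructor]. unfold step; simpl; now rewrite E. Qed.

Lemma st_jmp X P a z j R : nth_error P a = Some (DECJZ z j) -> R z = 0 -> star X P (a,R) (j,R).
Proof. intros E Hz. pose proof (st1 X P a R _ E). simpl in H. now rewrite Hz in H. Qed.

Ltac stp C i := eapply star_trans; [eapply st1; eapply (cat _ _ _ i _ _ C eq_refl); lia|]; simpl exec.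
Ltac jmp C i := eapply star_trans; [eapply st_jmp; [eapply (cat _ _ _ i _ _ C eq_refl); lia|]|].

Definition clr a r z := [DECJZ r (a+2); DECJZ z a].
Lemma clr_spec X P a r z R : contains P a (clr a r z) -> r <> z -> R z = 0 ->
  star X P (a,R) (a+2, upd R r 0).
Proof.
  intros C Hrz. remember (R r) as n. revert R Heqn. induction n; intros R Hn Hz.
  - stp C 0. rewrite <- Hn. replace (upd R r 0) with R by (regs_eq). constructor.
  - stp C 0. rewrite <- Hn. jmp C 1. rewrite upd_other; auto.
    replace (upd R r 0) with (upd (upd R r n) r 0) by regs_eq.
    apply IHn. now rewrite upd_same. rewrite upd_other; auto.
Qed.

Definition mov a r s z := [DECJZ r (a+3); INC s; DECJZ z a].
Lemma mov_spec X P a r s z R : contains P a (mov a r s z) -> r <> s -> r <> z -> s <> z -> R z = 0 ->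
  star X P (a,R) (a+3, upd (upd R s (R s + R r)) r 0).
Proof.
  intros C H1 H2 H3. remember (R r) as n. revert R Heqn. induction n; intros R Hn Hz.
  - stp C 0. rewrite <- Hn. replace (upd (upd R s (R s + 0)) r 0) with R by regs_eq. constructor.
  - stp C 0. rewrite <- Hn. stp C 1. jmp C 2. rewrite !upd_other; auto.
    set (R1 := upd (upd R r n) s (S (upd R r n s))).
    replace (upd (upd R s (R s + S n)) r 0) with (upd (upd R1 s (R1 s + n)) r 0).
    + apply IHn. unfold R1. rewrite upd_other by auto. now rewrite upd_same.
      unfold R1. rewrite !upd_other; auto.
    + unfold R1. regs_eq.
Qed.

Definition mov2 a r s t z := [DECJZ r (a+4); INC s; INC t; DECJZ z a].
Lemma mov2_spec X P a r s t z R : contains P a (mov2 a r s t z) -> r <> s -> r <> z -> s <> z ->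
  r <> t -> t <> z -> s <> t -> R z = 0 ->
  star X P (a,R) (a+4, upd (upd (upd R s (R s + R r)) t (R t + R r)) r 0).
Proof.
  intros C H1 H2 H3 H4 H5 H6. remember (R r) as n. revert R Heqn. induction n; intros R Hn Hz.
  - stp C 0. rewrite <- Hn. replace (upd (upd (upd R s (R s + 0)) t (R t + 0)) r 0) with R by regs_eq. constructor.
  - stp C 0. rewrite <- Hn. stp C 1. stp C 2. jmp C 3. rewrite !upd_other; auto.
    set (R0 := upd (upd R r n) s (S (upd R r n s))).
    set (R1 := upd R0 t (S (R0 t))).
    replace (upd (upd (upd R s (R s + S n)) t (R t + S n)) r 0) with
      (upd (upd (upd R1 s (R1 s + n)) t (R1 t + n)) r 0).
    + apply IHn. unfold R1, R0. rewrite !upd_other by auto. now rewrite upd_same.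
      unfold R1, R0. rewrite !upd_other; auto.
    + unfold R1, R0. regs_eq.
Qed.
Local Open Scope nat_scope.

Fixpoint clrs a b m z : prog := match m with 0 => [] | S m' => clr a b z ++ clrs (a+2) (S b) m' z end.
Lemma clrs_len a b m z : length (clrs a b m z) = 2*m.
Proof. revert a b; induction m; intros; simpl; auto. rewrite IHm. lia. Qed.

Lemma clrs_spec X P m : forall a b z R, contains P a (clrs a b m z) -> (z < b \/ b + m <= z) -> R z = 0 ->
  exists R', star X P (a,R) (a+2*m, R') /\ (forall i, i < m -> R' (b+i) = 0) /\
    (forall k, (k < b \/ b + m <= k) -> R' k = R k).
Proof.
  induction m; intros a b z R C Hz H0.
  - exists R. rewrite Nat.add_0_r. split; [constructor|]. split; intros; auto; lia.
  - simpl clrs in C. change (contains P a (clr a b z ++ clrs (a+2) (S b) m z)) in C. apply contains_app in C as [C1 C2]. simpl in C2.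
    pose proof (clr_spec X P a b z R C1 ltac:(lia) H0) as S1.
    destruct (IHm (a+2) (S b) z (upd R b 0) C2 ltac:(lia)) as [R' [S2 [E1 E2]]].
    { rewrite upd_other; auto; lia. }
    exists R'. split; [|split].
    + eapply star_trans; [exact S1|]. replace (a + 2 * S m) with (a+2+2*m) by lia. exact S2.
    + intros i Hi. destruct i. rewrite Nat.add_0_r, E2 by lia. apply upd_same.
      replace (b + S i) with (S b + i) by lia. apply E1. lia.
    + intros k Hk. rewrite E2 by lia. apply upd_other; lia.
Qed.

Definition ireg (ins : instr) := match ins with INC r | DECJZ r _ | ORC r => r end.
Definition regs_lt m (q : prog) := forall ins, In ins q -> ireg ins < m.
Definition maxreg (q:prog) := fold_right (fun ins m => Nat.max (ireg ins) m) 0 q.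
Lemma maxreg_lt q : regs_lt (S (maxreg q)) q.
Proof. induction q; intros ins H; simpl in *. contradiction. destruct H; subst; try lia.
  specialize (IHq _ H). lia. Qed.

Definition reloc_i o b h (ins:instr) := match ins with INC r => INC (b+r)
  | DECJZ r j => DECJZ (b+r) (o + Nat.min j h) | ORC r => ORC (b+r) end.
Definition reloc o b (q:prog) := map (reloc_i o b (length q)) q.

Lemma reloc_spec Y P q o b mq : regs_lt mq q -> contains P o (reloc o b q) ->
  forall s s', star Y q s s' -> forall R', (forall i, i < mq -> R' (b+i) = snd s i) ->
  exists R'', star Y P (o + Nat.min (fst s) (length q), R') (o + Nat.min (fst s') (length q), R'') /\
   (forall i, i < mq -> R'' (b+i) = snd s' i) /\ (forall k, (k < b \/ b + mq <= k) -> R'' k = R' k).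
Proof.
  intros Hq C s s' H. induction H; intros R' HR.
  - exists R'. split; [constructor|split; auto].
  - destruct s1 as [pc Rq]. unfold step in H; simpl in H.
    destruct (nth_error q pc) as [ins|] eqn:E; [|discriminate]. injection H as <-. cbn [fst snd] in HR.
    assert (Hpc : pc < length q) by (apply nth_error_Some; congruence).
    assert (Hr : ireg ins < mq) by (apply Hq; eapply nth_error_In; eauto).
    assert (EP : nth_error P (o + pc) = Some (reloc_i o b (length q) ins)).
    { rewrite C. unfold reloc. now rewrite nth_error_map, E. unfold reloc. rewrite length_map. auto. }
    simpl fst. rewrite Nat.min_l by lia.
    destruct ins as [r|r j|r]; simpl in EP, Hr; cbn [exec fst snd] in IHstar.
    + destruct (IHstar (upd R' (b+r) (S (R' (b+r))))) as [R'' [S1 [E1 E2]]].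
      { intros i Hi. unfold upd. simpl. destruct (Nat.eqb_spec (b+i) (b+r)), (Nat.eqb_spec i r); try lia; subst; auto. }
      exists R''. split; [|split]; auto.
      * eapply star_step. unfold step. simpl. rewrite EP. simpl. reflexivity.
        rewrite (Nat.min_l (S pc)) in S1 by lia. replace (S (o+pc)) with (o + S pc) by lia. exact S1.
      * intros k Hk. rewrite E2 by auto. apply upd_other. lia.
    + pose proof (HR r Hr) as Hb. destruct (Rq r) eqn:Er; cbn [fst snd] in IHstar.
      * destruct (IHstar R') as [R'' [S1 [E1 E2]]]; auto.
        exists R''. split; auto. eapply star_step. unfold step. simpl. rewrite EP. simpl. rewrite Hb. reflexivity.
        exact S1.
      * destruct (IHstar (upd R' (b+r) n)) as [R'' [S1 [E1 E2]]].
        { intros i Hi. unfold upd. simpl. destruct (Nat.eqb_spec (b+i) (b+r)), (Nat.eqb_spec i r); try lia; subst; auto. }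
        exists R''. split; [|split]; auto.
        -- eapply star_step. unfold step. simpl. rewrite EP. simpl. rewrite Hb. reflexivity.
           rewrite (Nat.min_l (S pc)) in S1 by lia. replace (S (o+pc)) with (o + S pc) by lia. exact S1.
        -- intros k Hk. rewrite E2 by auto. apply upd_other. lia.
    + pose proof (HR r Hr) as Hb.
      destruct (IHstar (upd R' (b+r) (if Y (R' (b+r)) then 1 else 0))) as [R'' [S1 [E1 E2]]].
      { intros i Hi. unfold upd. simpl. destruct (Nat.eqb_spec (b+i) (b+r)), (Nat.eqb_spec i r); try lia; subst; auto.
        now rewrite Hb. }
      exists R''. split; [|split]; auto.
      * eapply star_step. unfold step. simpl. rewrite EP. simpl. reflexivity.
        rewrite (Nat.min_l (S pc)) in S1 by lia. replace (S (o+pc)) with (o + S pc) by lia. exact S1.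
      * intros k Hk. rewrite E2 by auto. apply upd_other. lia.
Qed.

Definition call a r b mq z q : prog :=
  clrs a b mq z ++ mov (a+2*mq) r b z ++ reloc (a+2*mq+3) b q ++ mov (a+2*mq+3+length q) b r z.
Lemma call_len a r b mq z q : length (call a r b mq z q) = 2*mq + 6 + length q.
Proof. unfold call. rewrite !length_app, clrs_len. unfold reloc. rewrite length_map. simpl. lia. Qed.

Definition bit (b:bool) := if b then 1 else 0.

Lemma call_spec X Y P q a r b mq z R : regs_lt mq q -> 0 < mq -> computes_with Y q X ->
  contains P a (call a r b mq z q) -> r < b -> b + mq <= z -> R z = 0 ->
  exists R', star Y P (a,R) (a + (2*mq + 6 + length q), R') /\ R' r = bit (X (R r)) /\
    (forall k, k <> r -> (k < b \/ b + mq <= k) -> R' k = R k).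
Proof.
  intros Hq Hm Hc C Hr Hz H0. unfold call in C.
  apply contains_app in C as [C1 C]. apply contains_app in C as [C2 C]. apply contains_app in C as [C3 C4].
  rewrite clrs_len in C2, C3, C4. simpl in C3, C4. unfold reloc in C4 at 1. rewrite length_map in C4.
  destruct (clrs_spec Y P mq a b z R C1 ltac:(lia) H0) as [R1 [S1 [E1 E2]]].
  pose proof (mov_spec Y P _ r b z R1 C2 ltac:(lia) ltac:(lia) ltac:(lia) ltac:(rewrite E2; lia)) as S2.
  set (R2 := upd (upd R1 b (R1 b + R1 r)) r 0) in S2.
  destruct (Hc (R r)) as [f [Rq [Hrun Hbit]]].
  destruct (star_of_run _ _ _ _ _ _ Hrun) as [pc' [Sq Hpc']].
  assert (Hpc : length q <= pc') by (apply nth_error_None; auto).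
  destruct (reloc_spec Y P q _ b mq Hq C3 _ _ Sq R2) as [R3 [S3 [E3 E4]]].
  { intros i Hi. unfold R2, init. simpl. destruct i.
    - rewrite Nat.add_0_r, upd_other, upd_same by lia. simpl. specialize (E1 0 Hm). rewrite Nat.add_0_r in E1. rewrite E1, E2 by lia. auto.
    - rewrite !upd_other by lia. rewrite E1 by lia. auto. }
  simpl fst in S3. rewrite Nat.min_l in S3 by lia. rewrite Nat.min_r in S3 by lia. rewrite Nat.add_0_r in S3.
  simpl snd in E3.
  pose proof (mov_spec Y P _ b r z R3 C4 ltac:(lia) ltac:(lia) ltac:(lia)) as S4.
  assert (HR3z : R3 z = 0). { rewrite E4 by lia. unfold R2. rewrite !upd_other by lia. rewrite E2 by lia. auto. }
  specialize (S4 HR3z).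
  eexists. split; [|split].
  - eapply star_trans; [exact S1|]. eapply star_trans; [exact S2|]. eapply star_trans; [exact S3|].
    replace (a + (2 * mq + 6 + length q)) with (a + 2 * mq + 3 + length q + 3) by lia. exact S4.
  - rewrite upd_other by lia. rewrite upd_same. rewrite E4 by lia. unfold R2. rewrite upd_same.
    specialize (E3 0 Hm). rewrite Nat.add_0_r in E3. rewrite E3, Hbit. simpl. reflexivity.
  - intros k Hk1 Hk2. destruct (Nat.eq_dec k b). lia. rewrite !upd_other by lia. rewrite E4 by lia.
    unfold R2. rewrite !upd_other by lia. apply E2. lia.
Qed.
Local Open Scope nat_scope.

Section Comp.
Variables (K b mq z : nat) (q : prog).

Definition blk (pc:nat) (ins:instr) : prog :=
  let a := pc*K in match ins with
  | INC r => [INC r; DECJZ z (a+K)] ++ repeat (INC 0) (K-2)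
  | DECJZ r j => [DECJZ r (j*K); DECJZ z (a+K)] ++ repeat (INC 0) (K-2)
  | ORC r => call a r b mq z q ++ [DECJZ z (a+K)] end.

Hypothesis HK : K = 2*mq + 7 + length q.

Lemma blk_len pc ins : length (blk pc ins) = K.
Proof. destruct ins; cbn [blk]; simpl; rewrite ?repeat_length, ?length_app, ?call_len; simpl; lia. Qed.

Fixpoint comp (pc:nat) (p:prog) : prog := match p with [] => [] | i :: p' => blk pc i ++ comp (S pc) p' end.

Lemma comp_len p : forall pc, length (comp pc p) = length p * K.
Proof. induction p; intros; simpl; auto. rewrite length_app, blk_len, IHp. lia. Qed.

Lemma comp_contains p : forall pc i ins, nth_error p i = Some ins -> contains (comp pc p) (i*K) (blk (pc+i) ins).
Proof.
  induction p; intros pc i ins E. destruct i; discriminate.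
  destruct i; simpl in E.
  - injection E as <-. simpl. rewrite Nat.add_0_r. intros j Hj. simpl. rewrite nth_error_app1; auto.
  - intros j Hj. simpl comp. rewrite nth_error_app2 by (rewrite blk_len; lia).
    rewrite blk_len. replace (S i * K + j - K) with (i*K + j) by lia.
    replace (pc + S i) with (S pc + i) by lia. apply IHp; auto. rewrite blk_len in *; lia.
Qed.
End Comp.

Lemma sim X Y p q (Hq : regs_lt (S (maxreg q)) q) (Hc : computes_with Y q X) b (Hp : regs_lt b p) :
  let mq := S (maxreg q) in let z := b + mq in let K := 2*mq + 7 + length q in
  let P := comp K b mq z q 0 p in
  forall s s', star X p s s' -> forall R', (forall k, k < b -> R' k = snd s k) -> R' z = 0 ->
  exists R'', star Y P (fst s * K, R') (fst s' * K, R'') /\ (forall k, k < b -> R'' k = snd s' k) /\ R'' z = 0.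
Proof.
  intros mq z K P s s' H. induction H; intros R' HR Hz.
  - exists R'. split; [constructor|auto].
  - destruct s1 as [pc R]. unfold step in H; simpl in H.
    destruct (nth_error p pc) as [ins|] eqn:E; [|discriminate]. injection H as <-. cbn [fst snd] in HR |- *.
    assert (C := comp_contains K b mq z q eq_refl p 0 pc ins E). change (0+pc) with pc in C.
    assert (Hr : ireg ins < b) by (apply Hp; eapply nth_error_In; eauto).
    destruct ins as [r|r j|r]; simpl in Hr.
    + cbn [blk] in C. cbn [exec fst snd] in IHstar.
      destruct (IHstar (upd R' r (S (R' r)))) as [R'' [S1 [E1 E2]]].
      { intros k Hk. unfold upd. destruct (Nat.eqb_spec k r); subst; rewrite ?HR; auto. }
      { rewrite upd_other; auto. unfold z; lia. }
      exists R''. split; auto.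
      eapply star_trans; [eapply st1; apply (cat _ _ _ 0 _ _ C eq_refl); lia|]. simpl exec.
      eapply star_trans; [eapply st_jmp; [eapply (cat _ _ _ 1 _ _ C eq_refl); lia|]|].
      rewrite upd_other; auto. unfold z; lia. (replace (pc * K + K) with (S pc * K) by lia); exact S1.
    + cbn [blk] in C. pose proof (HR r Hr) as Hb. destruct (R r) eqn:Er; cbn [exec fst snd] in IHstar; rewrite Er in IHstar;
      cbn [fst snd] in IHstar.
      * destruct (IHstar R') as [R'' [S1 [E1 E2]]]; auto.
        exists R''. split; auto.
        eapply star_trans; [eapply st1; apply (cat _ _ _ 0 _ _ C eq_refl); lia|]. simpl exec. rewrite Hb. (replace (pc * K + K) with (S pc * K) by lia); exact S1.
      * destruct (IHstar (upd R' r n)) as [R'' [S1 [E1 E2]]].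
        { intros k Hk. unfold upd. destruct (Nat.eqb_spec k r); subst; rewrite ?HR; auto. }
        { rewrite upd_other; auto. unfold z; lia. }
        exists R''. split; auto.
        eapply star_trans; [eapply st1; apply (cat _ _ _ 0 _ _ C eq_refl); lia|]. simpl exec. rewrite Hb.
        eapply star_trans; [eapply st_jmp; [eapply (cat _ _ _ 1 _ _ C eq_refl); lia|]|].
        rewrite upd_other; auto. unfold z; lia. (replace (pc * K + K) with (S pc * K) by lia); exact S1.
    + cbn [blk] in C. cbn [exec fst snd] in IHstar. apply contains_app in C as [C1 C2].
      destruct (call_spec X Y P q _ r b mq z R' Hq ltac:(unfold mq; lia) Hc C1 Hr ltac:(unfold z; lia) Hz)
        as [R1 [S0 [E0 F0]]].
      destruct (IHstar R1) as [R'' [S1 [E1 E2]]].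
      { intros k Hk. unfold upd. destruct (Nat.eqb_spec k r); subst. rewrite E0, HR; auto.
        rewrite F0; auto. }
      { rewrite F0; unfold z in *; lia. }
      exists R''. split; auto.
      eapply star_trans; [exact S0|].
      rewrite call_len in C2.
      eapply star_trans; [eapply st_jmp; [eapply (cat _ _ _ 0 _ _ C2 eq_refl); lia|]|].
      rewrite F0; unfold z in *; try lia. (replace (pc * K + K) with (S pc * K) by lia); exact S1.
Qed.

Lemma Treducible_trans A X Y : Treducible A X -> Treducible X Y -> Treducible A Y.
Proof.
  intros [p Hp] [q Hq].
  set (b := S (maxreg p)). set (mq := S (maxreg q)). set (z := b + mq). set (K := 2*mq + 7 + length q).
  exists (comp K b mq z q 0 p). intros n.
  destruct (Hp n) as [f [Rp [Hrun Hbit]]].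
  destruct (star_of_run _ _ _ _ _ _ Hrun) as [pc' [Sp Hpc']].
  destruct (sim X Y p q (maxreg_lt q) Hq b (maxreg_lt p) _ _ Sp (init n)) as [R'' [S1 [E1 E2]]].
  all: try (intros k Hk; reflexivity).
  all: try (unfold init; destruct (Nat.eqb_spec z 0); [unfold z, b in *; lia|reflexivity]).
  apply run_of_star in S1. destruct S1 as [f' Hf']. exists f', R''. simpl in Hf'. split; auto.
  rewrite E1. simpl. auto. unfold b; lia.
  simpl. apply nth_error_None. rewrite comp_len by reflexivity.
  apply nth_error_None in Hpc'. apply Nat.mul_le_mono_r. auto.
Qed.
Local Open Scope nat_scope.

Definition fstep (x : nat*nat*nat) : nat*nat*nat :=
  match x with (k,m,d) => match d with 0 => (S k, 0, S m) | S d' => (k, S m, d') end end.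
Fixpoint trip c x := match c with 0 => x | S c => trip c (fstep x) end.
Definition tri n := trip n (0,0,0).
Definition inS n := match tri n with (_, m, _) => Nat.eqb m 0 end.
Definition triK n := fst (fst (tri n)).
Definition merge (X Z : Cantor) : Cantor := fun n => if inS n then Z (triK n) else X n.

Definition loopc z := [DECJZ 4 14; DECJZ 3 8; INC 2; DECJZ z 4] ++ mov 8 2 3 z ++ [INC 3; INC 1; DECJZ z 4].

Lemma ex_star X P s s1 t (Q : regs -> Prop): star X P s s1 -> (exists R', star X P s1 (t,R') /\ Q R') -> exists R', star X P s (t,R') /\ Q R'.
Proof. intros H [R' [H1 H2]]. exists R'. split; auto. eapply star_trans; eauto. Qed.
Ltac estp C i := eapply ex_star; [eapply st1; eapply (cat _ _ _ i _ _ C eq_refl); lia|]; simpl exec.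
Ltac ejmp C i := eapply ex_star; [eapply st_jmp; [eapply (cat _ _ _ i _ _ C eq_refl); lia|]|].

Lemma loop_spec X P z : 6 <= z -> contains P 4 (loopc z) -> forall c R, R 4 = c -> R z = 0 ->
  exists R', star X P (4,R) (14,R') /\ (R' 1, R' 2, R' 3) = trip c (R 1, R 2, R 3) /\
    R' 0 = R 0 /\ R' 5 = R 5 /\ R' z = 0.
Proof.
  intros Hz C. pose proof C as C'. unfold loopc in C'. apply contains_app in C' as [_ C']. apply contains_app in C' as [Cm _].
  simpl in Cm.
  induction c; intros R H4 H0.
  - exists R. split; [|auto]. stp C 0. rewrite H4. constructor.
  - estp C 0. rewrite H4. destruct (R 3) eqn:E3.
    + estp C 1. rewrite upd_other by lia. rewrite E3.
      set (R1 := upd R 4 c).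
      pose proof (mov_spec X P 8 2 3 z R1 Cm ltac:(lia) ltac:(lia) ltac:(lia) ltac:(unfold R1; rewrite upd_other; lia)) as S1.
      eapply ex_star; [exact S1|]. simpl Nat.add.
      estp C 7. estp C 8. ejmp C 9. { rewrite !upd_other by lia. unfold R1; rewrite upd_other; lia. }
      match goal with |- exists R', star _ _ (_, ?RR) _ /\ _ => set (R2 := RR) end.
      destruct (IHc R2) as [R' [S2 [E1 [E2 [E3' E4]]]]].
      { unfold R2, R1. rewrite !upd_other by lia. apply upd_same. }
      { unfold R2, R1. rewrite !upd_other by lia. auto. }
      exists R'. split; auto. split; [|split; [|split]]; auto.
      * rewrite E1. simpl. f_equal. unfold R2, R1. unfold upd; simpl. f_equal. f_equal. lia.
    + estp C 1. rewrite upd_other by lia. rewrite E3. estp C 2. ejmp C 3. { rewrite !upd_other by lia. auto. }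
      match goal with |- exists R', star _ _ (_, ?RR) _ /\ _ => set (R2 := RR) end.
      destruct (IHc R2) as [R' [S2 [E1 [E2 [E3' E4]]]]].
      { unfold R2. rewrite !upd_other by lia. apply upd_same. }
      { unfold R2. rewrite !upd_other by lia. auto. }
      exists R'. split; auto.
Qed.

Lemma contains_refl P : contains P 0 P.
Proof. intros i _. reflexivity. Qed.

Definition Pm (q : prog) : prog :=
  let mq := S (maxreg q) in let z := 6 + mq in let cs := 2*mq+6+length q in
  (mov2 0 0 4 5 z ++ loopc z ++ [DECJZ 2 (19+cs)] ++ mov 15 5 0 z) ++
  call 18 0 6 mq z q ++ [DECJZ z (23+cs)] ++ mov (19+cs) 1 0 z ++ [ORC 0].

Lemma merge_le X Z : Treducible X Z -> Treducible (merge X Z) Z.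
Proof.
  intros [q Hq]. exists (Pm q). intros n.
  set (mq := S (maxreg q)). set (z := 6 + mq). set (cs := 2*mq+6+length q).
  assert (Hlen : length (Pm q) = 23 + cs).
  { unfold Pm. rewrite !length_app, call_len. simpl. fold mq. unfold cs. lia. }
  pose proof (contains_refl (Pm q)) as C. unfold Pm in C at 2. fold mq z cs in C.
  apply contains_app in C as [C C5]. apply contains_app in C as [C1 C]. apply contains_app in C as [C2 C].
  apply contains_app in C as [C3 C4].
  apply contains_app in C5 as [C6 C5].
  apply contains_app in C5 as [C7 C5]. apply contains_app in C5 as [C8 C9].
  assert (Hc : forall P o o' Q, contains P o Q -> o = o' -> contains P o' Q) by (intros; subst; auto).
  apply (Hc _ _ 14) in C3; [|simpl; lia].
  apply (Hc _ _ 15) in C4; [|simpl; lia].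
  apply (Hc _ _ 18) in C6; [|simpl; lia].
  apply (Hc _ _ (18+cs)) in C7; [|rewrite ?length_app, call_len; simpl; unfold cs; lia].
  apply (Hc _ _ (19+cs)) in C8; [|rewrite ?length_app, call_len; simpl; unfold cs; lia].
  apply (Hc _ _ (22+cs)) in C9; [|rewrite ?length_app, call_len; simpl; unfold cs; lia].
  simpl in C1.
  pose proof (mov2_spec Z (Pm q) 0 0 4 5 z (init n) C1 ltac:(lia) ltac:(unfold z; lia) ltac:(unfold z; lia)
     ltac:(lia) ltac:(unfold z; lia) ltac:(lia) ltac:(unfold init; destruct (Nat.eqb_spec z 0); unfold z in *; lia)) as S1.
  match type of S1 with star _ _ _ (_, ?RR) => set (R1 := RR) in S1 end.
  destruct (loop_spec Z (Pm q) z ltac:(unfold z; lia) C2 n R1) as [R2 [S2 [T2 [E0 [E5 Ez]]]]].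
  { reflexivity. }
  { unfold R1. rewrite !upd_other by (unfold z; lia). unfold init. destruct (Nat.eqb_spec z 0); unfold z in *; lia. }
  assert (HR1 : (R1 1, R1 2, R1 3) = (0,0,0)) by reflexivity. rewrite HR1 in T2. fold (tri n) in T2.
  assert (HM : merge X Z n = if Nat.eqb (R2 2) 0 then Z (R2 1) else X n).
  { unfold merge, inS, triK. rewrite <- T2. reflexivity. }
  destruct (R2 2) eqn:E2.
  -
    assert (S3 : star Z (Pm q) (14, R2) (19+cs, R2)).
    { pose proof (st1 Z (Pm q) 14 R2 _ (cat _ _ _ 0 _ 14 C3 eq_refl ltac:(lia))) as H. simpl exec in H. rewrite E2 in H. exact H. }
    pose proof (mov_spec Z (Pm q) (19+cs) 1 0 z R2 C8 ltac:(lia) ltac:(unfold z; lia) ltac:(unfold z; lia) Ez) as S4.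
    set (R3 := upd (upd R2 0 (R2 0 + R2 1)) 1 0) in S4.
    assert (S5 : star Z (Pm q) (19+cs+3, R3) (23+cs, upd R3 0 (bit (Z (R3 0))))).
    { pose proof (st1 Z (Pm q) (19+cs+3) R3 _ (cat _ _ _ 0 _ (19+cs+3) C9 eq_refl ltac:(lia))) as H. simpl exec in H.
      replace (23+cs) with (S (19+cs+3)) by lia. exact H. }
    destruct (run_of_star _ _ _ _ (star_trans _ _ _ _ _ S1 (star_trans _ _ _ _ _ S2 (star_trans _ _ _ _ _ S3 (star_trans _ _ _ _ _ S4 S5)))))
      as [f Hf].
    { cbn [fst]. apply nth_error_None. lia. }
    exists f. eexists. split. exact Hf. simpl. rewrite upd_same. rewrite HM. simpl.
    unfold R3. rewrite upd_other by lia. rewrite upd_same. rewrite E0. unfold R1. reflexivity.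
  -
    assert (S3 : star Z (Pm q) (14, R2) (15, upd R2 2 n0)).
    { pose proof (st1 Z (Pm q) 14 R2 _ (cat _ _ _ 0 _ 14 C3 eq_refl ltac:(lia))) as H. simpl exec in H. rewrite E2 in H. exact H. }
    pose proof (mov_spec Z (Pm q) 15 5 0 z (upd R2 2 n0) C4 ltac:(lia) ltac:(unfold z; lia) ltac:(unfold z; lia)
       ltac:(rewrite upd_other by (unfold z; lia); exact Ez)) as S4.
    set (R3 := upd (upd (upd R2 2 n0) 0 _) 5 0) in S4.
    destruct (call_spec X Z (Pm q) q 18 0 6 mq z R3 (maxreg_lt q) ltac:(unfold mq; lia) Hq C6 ltac:(lia)
      ltac:(unfold z; lia) ltac:(unfold R3; rewrite !upd_other by (unfold z; lia); exact Ez)) as [R4 [S5 [F0 F1]]].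
    assert (S6 : star Z (Pm q) (18 + cs, R4) (23+cs, R4)).
    { eapply st_jmp. apply (cat _ _ _ 0 _ _ C7 eq_refl). lia. rewrite F1 by (unfold z; lia).
      unfold R3; rewrite !upd_other by (unfold z; lia); exact Ez. }
    replace (18 + (2 * mq + 6 + length q)) with (18+cs) in S5 by reflexivity.
    destruct (run_of_star _ _ _ _ (star_trans _ _ _ _ _ S1 (star_trans _ _ _ _ _ S2 (star_trans _ _ _ _ _ S3 (star_trans _ _ _ _ _ S4 (star_trans _ _ _ _ _ S5 S6))))))
      as [f Hf].
    { cbn [fst]. apply nth_error_None. lia. }
    exists f. eexists. split. exact Hf. simpl. rewrite F0. rewrite HM. simpl.
    unfold R3. rewrite upd_other by lia. rewrite upd_same. rewrite upd_other by lia. rewrite upd_other by lia. rewrite E0, E5. reflexivity.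
Qed.

Fixpoint T k := match k with 0 => 0 | S k => S k + T k end.

Lemma trip_add a : forall b x, trip (a + b) x = trip b (trip a x).
Proof. induction a; intros; simpl; auto. Qed.
Lemma trip_S j x : trip (S j) x = fstep (trip j x).
Proof. replace (S j) with (j + 1) by lia. rewrite trip_add. reflexivity. Qed.
Lemma trip_part k : forall j, j <= k -> trip j (k,0,k) = (k, j, k - j).
Proof. induction j; intros H. simpl. f_equal. f_equal. lia.
  rewrite trip_S, IHj by lia. simpl. destruct (k - j) eqn:E. lia. f_equal. f_equal. lia. Qed.
Lemma tri_T k : tri (T k) = (k, 0, k).
Proof. induction k. reflexivity. unfold tri in *. change (T (S k)) with (S k + T k). rewrite Nat.add_comm, trip_add, IHk.
  rewrite trip_S, trip_part by lia. rewrite Nat.sub_diag. reflexivity. Qed.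

Definition Pt : prog := mov 0 0 1 3 ++ [DECJZ 1 13; INC 0] ++ mov2 5 1 0 2 3 ++ mov 9 2 1 3 ++ [DECJZ 3 3; ORC 0].

Lemma Pt_loop X : forall v R, R 1 = v -> R 2 = 0 -> R 3 = 0 ->
  exists R', star X Pt (3,R) (13,R') /\ R' 0 = R 0 + T v /\ R' 3 = 0.
Proof.
  pose proof (contains_refl Pt) as C. unfold Pt in C at 2.
  apply contains_app in C as [C0 C]. apply contains_app in C as [C1 C]. apply contains_app in C as [C2 C].
  apply contains_app in C as [C3 C4]. simpl in C1, C2, C3, C4.
  induction v; intros R H1 H2 H3.
  - exists R. split; [|split; auto; simpl; lia]. stp C1 0. rewrite H1. constructor.
  - estp C1 0. rewrite H1. estp C1 1.
    set (R1 := upd (upd R 1 v) 0 (S (upd R 1 v 0))).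
    eapply ex_star; [apply (mov2_spec X Pt 5 1 0 2 3 R1 C2); try lia; unfold R1; rewrite !upd_other; lia|].
    simpl Nat.add.
    match goal with |- exists R', star _ _ (_, ?RR) _ /\ _ => set (R2 := RR) end.
    eapply ex_star; [apply (mov_spec X Pt 9 2 1 3 R2 C3); try lia; unfold R2, R1; rewrite !upd_other; lia|].
    simpl Nat.add.
    match goal with |- exists R', star _ _ (_, ?RR) _ /\ _ => set (R3 := RR) end.
    ejmp C4 0. unfold R3, R2, R1; rewrite !upd_other; lia.
    destruct (IHv R3) as [R' [S1 [E1 E2]]].
    + unfold R3, R2, R1. unfold upd; simpl. lia.
    + unfold R3, R2, R1. unfold upd; simpl. auto.
    + unfold R3, R2, R1. unfold upd; simpl. auto.
    + exists R'. split; auto. split; auto. rewrite E1. unfold R3, R2, R1. unfold upd; simpl. lia.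
Qed.

Lemma le_merge X Z : Treducible Z (merge X Z).
Proof.
  exists Pt. intros k.
  pose proof (contains_refl Pt) as C. unfold Pt in C at 2.
  apply contains_app in C as [C0 C]. apply contains_app in C as [C1 C]. apply contains_app in C as [C2 C].
  apply contains_app in C as [C3 C4]. simpl in C0, C1, C2, C3, C4.
  pose proof (mov_spec (merge X Z) Pt 0 0 1 3 (init k) C0 ltac:(lia) ltac:(lia) ltac:(lia) eq_refl) as S1.
  simpl Nat.add in S1.
  destruct (Pt_loop (merge X Z) k (upd (upd (init k) 1 (init k 1 + init k 0)) 0 0)) as [R' [S2 [E1 E2]]];
    try reflexivity.
  pose proof (st1 (merge X Z) Pt 13 R' _ (cat _ _ _ 1 _ 13 C4 eq_refl ltac:(lia))) as S3. simpl exec in S3.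
  destruct (run_of_star _ _ _ _ (star_trans _ _ _ _ _ S1 (star_trans _ _ _ _ _ S2 S3))) as [f Hf].
  { reflexivity. }
  exists f. eexists. split. exact Hf. simpl. rewrite upd_same. rewrite E1. simpl.
  unfold merge, inS, triK. rewrite tri_T. reflexivity.
Qed.

Definition BS (B : Cantor -> Prop) (X : Cantor) := exists Z, B Z /\ forall n, inS n = false -> X n = Z n.

Lemma Min_sub B : maximal_antichain B -> forall X, Min X -> BS B X.
Proof.
  intros [[Ha [Hb Hc]] Hmax] X [HX Hmin].
  destruct (classic (B X)) as [HBX|HBX].
  { exists X. split; auto. }
  destruct (classic (exists Y, B Y /\ Treducible X Y)) as [[Y [HY HXY]]|Hno].
  - exists (merge X Y). split.
    + apply (Hb Y). auto. split. apply merge_le; auto. apply le_merge.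
    + intros n Hn. unfold merge. rewrite Hn. reflexivity.
  - exfalso. apply (Hmax X HX HBX). split; [|split].
    + intros W [HW|[HW1 HW2]]; auto. intros Hc'. apply HX. eapply Treducible_trans; eauto.
    + intros W V [HW|HW] HVW. left; eauto. right. destruct HW, HVW. split; eapply Treducible_trans; eauto.
    + intros W V [HW|[HW1 HW2]] [HV|[HV1 HV2]] Hne.
      * auto.
      * split; intros [H1 H2].
        -- destruct (Hmin W (Treducible_trans _ _ _ H1 HV1)) as [Hcw|Hxw].
           ++ eapply Ha; eauto.
           ++ apply H2. eapply Treducible_trans; eauto.
        -- apply Hno. exists W. split; auto. eapply Treducible_trans; eauto.
      * split; intros [H1 H2].
        -- apply Hno. exists V. split; auto. eapply Treducible_trans; eauto.
        -- destruct (Hmin V (Treducible_trans _ _ _ H1 HW1)) as [Hcv|Hxv].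
           ++ eapply Ha; eauto.
           ++ apply H2. eapply Treducible_trans; eauto.
      * exfalso. apply Hne. split; eapply Treducible_trans; eauto.
Qed.
Open Scope R_scope.

Definition lsum (s:R) (l : list (list bool)) : R :=
  fold_right (fun sg acc => Rpower 2 (-(s * INR (length sg))) + acc) 0 l.
Definition lcost s (L : list (option (list bool))) : R := fold_right (fun o acc => cost s o + acc) 0 L.
Definition Ecl (D : nat -> list (list bool)) j := None :: map Some (D j).
Fixpoint F D N := match N with O => [] | S N => F D N ++ Ecl D N end.
Definition Cf D i := nth i (F D (S i)) None.

Lemma Rpower_pos x y : 0 < Rpower x y.
Proof. unfold Rpower. apply exp_pos. Qed.
Lemma cost_nonneg s o : 0 <= cost s o.
Proof. destruct o; simpl. left; apply Rpower_pos. lra. Qed.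
Lemma lcost_nonneg s L : 0 <= lcost s L.
Proof. induction L; simpl. lra. pose proof (cost_nonneg s a). lra. Qed.
Lemma lcost_app s a b : lcost s (a ++ b) = lcost s a + lcost s b.
Proof. induction a; simpl; lra. Qed.
Lemma lcost_Ecl s D j : lcost s (Ecl D j) = lsum s (D j).
Proof. unfold Ecl. simpl. induction (D j); simpl; lra. Qed.
Lemma lcost_F s D N : lcost s (F D (S N)) = sum_f_R0 (fun j => lsum s (D j)) N.
Proof. induction N. change (F D 1) with ([] ++ Ecl D 0). rewrite lcost_app, lcost_Ecl. simpl. lra.
  change (F D (S (S N))) with (F D (S N) ++ Ecl D (S N)). rewrite lcost_app, IHN, lcost_Ecl. simpl. lra. Qed.
Lemma F_len D N : (N <= length (F D N))%nat.
Proof. induction N; simpl. lia. rewrite length_app. unfold Ecl. simpl. lia. Qed.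
Lemma F_mono D N M : (N <= M)%nat -> exists L, F D M = F D N ++ L.
Proof. induction 1. exists []. now rewrite app_nil_r. destruct IHle as [L HL]. exists (L ++ Ecl D m).
  simpl. rewrite HL. now rewrite app_assoc. Qed.
Lemma Cf_eq D i M : (i < M)%nat -> Cf D i = nth i (F D M) None.
Proof. intros H. unfold Cf. destruct (F_mono D (S i) M) as [L HL]. lia. rewrite HL.
  rewrite app_nth1; auto. pose proof (F_len D (S i)). lia. Qed.

Lemma sum_zero N : sum_f_R0 (fun _ => 0) N = 0.
Proof. induction N; simpl; lra. Qed.
Lemma sum_shift f N : sum_f_R0 f (S N) = f O + sum_f_R0 (fun i => f (S i)) N.
Proof. rewrite decomp_sum by lia. reflexivity. Qed.

Lemma sum_nth_le s L : forall N, sum_f_R0 (fun i => cost s (nth i L None)) N <= lcost s L.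
Proof.
  induction L; intros N.
  - simpl. rewrite (sum_eq _ (fun _ => 0)). rewrite sum_zero. lra. intros i _. destruct i; reflexivity.
  - destruct N. simpl. pose proof (lcost_nonneg s L). lra.
    rewrite sum_shift. simpl. specialize (IHL N). lra.
Qed.

Lemma HnullL s (A : Cantor -> Prop) :
  (forall eps, 0 < eps -> exists D : nat -> list (list bool),
     (forall X, A X -> exists j sg, In sg (D j) /\ prefix sg X) /\
     (forall N, sum_f_R0 (fun j => lsum s (D j)) N <= eps)) -> Hnull s A.
Proof.
  intros H eps Heps. destruct (H eps Heps) as [D [Hcov Hsum]]. exists (Cf D). split.
  - intros X HX. destruct (Hcov X HX) as [j [sg [Hin Hp]]].
    assert (Hin' : In (Some sg) (Ecl D j)) by (right; apply in_map; auto).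
    destruct (In_nth _ _ None Hin') as [q [Hq Hnq]].
    exists (length (F D j) + q)%nat, sg. split; auto.
    rewrite (Cf_eq D _ (S (length (F D j) + q) + S j)) by lia.
    destruct (F_mono D (S j) (S (length (F D j) + q) + S j)) as [L HL]. lia.
    rewrite HL. rewrite app_nth1. simpl. rewrite app_nth2 by lia.
    replace (length (F D j) + q - length (F D j))%nat with q by lia. auto.
    simpl. rewrite length_app. lia.
  - intros N. eapply Rle_trans; [|apply (Hsum N)]. rewrite <- lcost_F.
    rewrite (sum_eq _ (fun i => cost s (nth i (F D (S N)) None))). apply sum_nth_le.
    intros i Hi. rewrite <-  (Cf_eq D i (S N)) by lia. reflexivity.
Qed.
Open Scope R_scope.

Fixpoint vars (p : nat) (sg : list bool) : list (list bool) :=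
  match sg with [] => [[]] | b :: sg' => let V := vars (S p) sg' in
    if inS p then map (cons true) V ++ map (cons false) V else map (cons b) V end.
Fixpoint cnt (p n : nat) : nat := match n with O => O | S n => ((if inS p then 1 else 0) + cnt (S p) n)%nat end.

Lemma vars_len sg : forall p t, In t (vars p sg) -> length t = length sg.
Proof. induction sg; intros p t H; simpl in *. destruct H as [<-|[]]; auto.
  destruct (inS p). apply in_app_or in H. destruct H as [H|H]; apply in_map_iff in H as [t' [<- H]]; simpl; f_equal; eauto.
  apply in_map_iff in H as [t' [<- H]]; simpl; f_equal; eauto. Qed.

Lemma vars_count sg : forall p, length (vars p sg) = (2 ^ (cnt p (length sg)))%nat.
Proof. induction sg; intros p; simpl. auto. destruct (inS p); rewrite ?length_app, !length_map, IHsg; simpl; lia. Qed.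

Lemma vars_cover (X Z : Cantor) (HXZ : forall n, inS n = false -> X n = Z n) sg : forall p,
  (forall i, (i < length sg)%nat -> nth i sg false = Z (p+i)%nat) ->
  exists t, In t (vars p sg) /\ forall i, (i < length t)%nat -> nth i t false = X (p+i)%nat.
Proof.
  induction sg; intros p H.
  - exists []. simpl. split; auto. intros; simpl in *; lia.
  - destruct (IHsg (S p)) as [t [Ht Hn]].
    { intros i Hi. replace (S p + i)%nat with (p + S i)%nat by lia. rewrite <- (H (S i)) by (simpl; lia). reflexivity. }
    assert (Hn' : forall i, (i < length (X p :: t))%nat -> nth i (X p :: t) false = X (p+i)%nat).
    { intros [|i] Hi; simpl. f_equal; lia. rewrite Hn by (simpl in Hi; lia). f_equal; lia. }
    simpl. destruct (inS p) eqn:E.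
    + exists (X p :: t). split; auto. apply in_or_app. destruct (X p); [left|right]; apply in_map; auto.
    + exists (X p :: t). split; auto. replace (X p) with a. apply in_map; auto.
      rewrite HXZ by auto. pose proof (H 0%nat ltac:(simpl; lia)) as H0. rewrite Nat.add_0_r in H0. simpl in H0. auto.
Qed.

Lemma cnt_snoc n : forall p, cnt p (S n) = (cnt p n + (if inS (p+n) then 1 else 0))%nat.
Proof. induction n; intros p. simpl. rewrite !Nat.add_0_r. destruct (inS p); lia.
  change (cnt p (S (S n))) with ((if inS p then 1 else 0) + cnt (S p) (S n))%nat. rewrite IHn. simpl.
  replace (p + S n)%nat with (S p + n)%nat by lia. simpl Nat.add. lia. Qed.

Lemma tri_S N : tri (S N) = fstep (tri N).
Proof. unfold tri. apply trip_S. Qed.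

Lemma tri_inv N : forall k m d, tri N = (k,m,d) ->
  (m + d = k /\ 2*N = k*(k+1) + 2*m /\ cnt 0 N = k + (if Nat.eqb m 0 then 0 else 1))%nat.
Proof.
  induction N; intros k m d H.
  - unfold tri in H. simpl in H. injection H as <- <- <-. simpl. lia.
  - rewrite tri_S in H. destruct (tri N) as [[k0 m0] d0] eqn:E.
    destruct (IHN k0 m0 d0 eq_refl) as [I1 [I2 I3]].
    rewrite cnt_snoc. change (0 + N)%nat with N. unfold inS at 1. rewrite E.
    destruct d0; simpl in H; injection H as <- <- <-.
    + destruct (Nat.eqb_spec m0 0); simpl; rewrite I3; destruct (Nat.eqb_spec m0 0); try lia; (split; [lia|split; [nia|lia]]).
    + destruct (Nat.eqb_spec m0 0); simpl; rewrite I3; destruct (Nat.eqb_spec m0 0); try lia;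
      split; try lia; split; nia.
Qed.

Lemma cnt_bound L N : (cnt 0 N * L <= N + 2*L*L)%nat.
Proof.
  destruct (tri N) as [[k m] d] eqn:E. destruct (tri_inv N k m d E) as [I1 [I2 I3]].
  assert (cnt 0 N <= k + 1)%nat by (rewrite I3; destruct (Nat.eqb m 0); lia).
  destruct (le_lt_dec (k+1) (2*L)). nia.
  assert (2*L*(k+1) <= k*(k+1))%nat by nia. nia.
Qed.
Open Scope R_scope.

Lemma lsum_const t l N : (forall x, In x l -> length x = N) ->
  lsum t l = INR (length l) * Rpower 2 (-(t * INR N)).
Proof. induction l; intros H. simpl. lra.
  change (lsum t (a::l)) with (Rpower 2 (-(t*INR (length a))) + lsum t l).
  change (length (a::l)) with (S (length l)). rewrite S_INR.
  rewrite IHl by (intros; apply H; right; auto).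
  rewrite H by (left; auto). lra. Qed.

Lemma pow2_Rpower c : INR (2 ^ c) = Rpower 2 (INR c).
Proof. rewrite pow_INR, Rpower_pow by lra. reflexivity. Qed.

Lemma per_cyl s t L sg : (0 < L)%nat -> 1 <= INR L * (t - s) ->
  lsum t (vars 0 sg) <= Rpower 2 (2 * INR L) * Rpower 2 (-(s * INR (length sg))).
Proof.
  intros HL H1. rewrite (lsum_const t _ (length sg)) by (intros; eapply vars_len; eauto).
  rewrite vars_count, pow2_Rpower, <- !Rpower_plus. apply Rle_Rpower. lra.
  pose proof (cnt_bound L (length sg)) as Hb. apply le_INR in Hb. rewrite mult_INR, !plus_INR, !mult_INR in Hb.
  simpl (INR 2) in Hb. set (c := INR (cnt 0 (length sg))) in *. set (N := INR (length sg)) in *.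
  assert (0 < INR L) by (apply lt_0_INR; auto). assert (0 <= N) by apply pos_INR.
  assert (c * INR L <= (N * (INR L * (t - s)) + 2 * INR L * INR L)) by nra.
  assert (c <= N * (t - s) + 2 * INR L).
  { apply (Rmult_le_reg_r (INR L)); auto. nra. }
  lra.
Qed.

Definition Dt (C : nat -> option (list bool)) j := match C j with Some sg => vars 0 sg | None => [] end.

Lemma transfer s t B : Hnull s B -> s < t -> Hnull t (BS B).
Proof.
  intros HB Hst. destruct (archimed_cor1 (t - s)) as [L [HL1 HL2]]. lra.
  assert (H1 : 1 <= INR L * (t - s)).
  { assert (0 < INR L) by (apply lt_0_INR; auto).
    apply (Rmult_lt_compat_l (INR L)) in HL1; auto. rewrite Rinv_r in HL1 by lra. lra. }
  set (K := Rpower 2 (2 * INR L)). assert (HK : 0 < K) by apply Rpower_pos.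
  apply HnullL. intros eps Heps. destruct (HB (eps / K)) as [C [Hc Hs]].
  { apply Rdiv_lt_0_compat; auto. }
  exists (Dt C). split.
  - intros X [Z [HZ HXZ]]. destruct (Hc Z HZ) as [i [sg [Ei Hp]]].
    destruct (vars_cover X Z HXZ sg 0) as [t0 [Ht0 Hn]].
    { intros i0 Hi0. apply Hp. auto. }
    exists i, t0. split. unfold Dt. rewrite Ei. auto. intros j Hj. apply Hn. auto.
  - intros N. apply Rle_trans with (sum_f_R0 (fun j => cost s (C j) * K) N).
    + apply sum_Rle. intros j _. unfold Dt. destruct (C j) as [sg|]; simpl.
      rewrite Rmult_comm. apply per_cyl; auto. lra.
    + rewrite <- scal_sum. specialize (Hs N).
      apply Rmult_le_compat_l with (r := K) in Hs; [|lra]. unfold Rdiv in Hs.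
      rewrite <- Rmult_assoc, (Rmult_comm K eps), Rmult_assoc, Rinv_r, Rmult_1_r in Hs by lra. exact Hs.
Qed.

Fixpoint allstr n : list (list bool) := match n with O => [[]] | S n => map (cons true) (allstr n) ++ map (cons false) (allstr n) end.
Lemma allstr_len n : forall x, In x (allstr n) -> length x = n.
Proof. induction n; intros x H; simpl in H. destruct H as [<-|[]]; auto.
  apply in_app_or in H. destruct H as [H|H]; apply in_map_iff in H as [x' [<- H]]; simpl; f_equal; auto. Qed.
Lemma allstr_count n : length (allstr n) = (2 ^ n)%nat.
Proof. induction n; simpl; auto. rewrite length_app, !length_map, IHn. lia. Qed.
Lemma allstr_cover n : forall X : Cantor, exists x, In x (allstr n) /\ prefix x X.
Proof. induction n; intros X. exists []. split. left; auto. intros i Hi; simpl in Hi; lia.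
  destruct (IHn (fun i => X (S i))) as [x [Hx Hp]]. exists (X O :: x). split.
  simpl. apply in_or_app. destruct (X O); [left|right]; apply in_map; auto.
  intros [|i] Hi; simpl; auto. apply Hp. simpl in Hi; lia. Qed.

Lemma Hnull_univ (A : Cantor -> Prop) : Hnull 2 A.
Proof.
  apply HnullL. intros eps Heps. destruct (archimed_cor1 eps Heps) as [N [HN1 HN2]].
  exists (fun j => match j with O => allstr N | _ => [] end). split.
  - intros X _. destruct (allstr_cover N X) as [x [Hx Hp]]. exists O, x. auto.
  - intros M. set (f := fun j : nat => lsum 2 match j with O => allstr N | S _ => [] end).
    assert (Hs : sum_f_R0 f M = lsum 2 (allstr N)).
    { induction M. reflexivity. change (sum_f_R0 f (S M)) with (sum_f_R0 f M + f (S M)). rewrite IHM.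
      unfold f. simpl. lra. }
    rewrite Hs.
    rewrite (lsum_const 2 _ N) by apply allstr_len; rewrite allstr_count, pow2_Rpower, <- Rpower_plus;
      replace (INR N + - (2 * INR N)) with (- INR N) by ring; rewrite Rpower_Ropp;
      apply Rle_trans with (/ INR N); [|lra];
      apply Rinv_le_contravar; [apply lt_0_INR; auto|];
      rewrite <- pow2_Rpower; apply le_INR; apply Nat.lt_le_incl, Nat.pow_gt_lin_r; lia.
Qed.

Lemma Hnull_mono s (A A' : Cantor -> Prop) : (forall X, A X -> A' X) -> Hnull s A' -> Hnull s A.
Proof. intros H HA eps Heps. destruct (HA eps Heps) as [C [Hc Hs]]. exists C. split; auto. Qed.

Theorem mainTheorem12 (r : R) :
  is_dimH Min r ->
  forall B : Cantor -> Prop, maximal_antichain B ->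
    exists d, is_dimH B d /\ r <= d.
Proof.
  intros Hr B HB.
  set (E := fun x => exists s, 0 <= s /\ Hnull s B /\ x = -s).
  destruct (completeness E) as [m [Hm1 Hm2]].
  { exists 0. intros x [s [Hs [_ ->]]]. lra. }
  { exists (-2). exists 2. split. lra. split; auto. apply Hnull_univ. }
  assert (HD : is_dimH B (-m)).
  { split.
    - intros s Hs HN. assert (-s <= m) by (apply Hm1; exists s; auto). lra.
    - intros t Ht. assert (m <= -t). { apply Hm2. intros x [s [Hs [HN ->]]]. specialize (Ht s Hs HN). lra. } lra. }
  exists (-m). split; auto. apply (proj2 HD). intros s Hs HN.
  destruct (Rle_or_lt r s) as [|Hlt]; auto. exfalso.
  set (t := (s + r) / 2).
  assert (Hnull t Min).
  { apply Hnull_mono with (A' := BS B). intros X HX. apply Min_sub; auto.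
    apply transfer with s; auto. unfold t; lra. }
  pose proof (proj1 Hr t ltac:(unfold t; lra) H). unfold t in H0. lra.
Qed.
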